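(* Let $f:\{1,\dots,n\}\to\{0,1\}$, let $S=\{i: f(i)=1\}$, and let $T=f(1)f(2)\cdots f(n)$ be the corresponding binary string. Then the number $z$ of factors in the LZ77 factorization of $T$ satisfies $z\le 3|S|+2$.
   Context: LZ77 factorization (greedy): start with $i=1$; while $i\le n$: if $T[i]$ is the first occurrence of its symbol, $T[i]$ is the next factor and $i\gets i+1$; otherwise take the largest $j\ge i$ such that $T[i..j]$ occurs in $T$ starting at some position $i'<i$ (overlap allowed), make $T[i..j]$ the next factor and set $i\gets j+1$. $z$ is the number of factors. *)

(* Defs.v *)
From mathcomp Require Import all_boot.
Set Implicit Arguments. Unset Strict Implicit. Unset Printing Implicit Defensive.

(* Greedy LZ77 factorization of a string T : seq A (positions 0-indexed;
   the paper's position i corresponds to index i-1 here). *)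
Section LZ77.
Variables (A : eqType) (T : seq A) (x0 : A).

Definition occ_at (i' i l : nat) : bool :=
  all (fun k => nth x0 T (i' + k) == nth x0 T (i + k)) (iota 0 l).

Definition lz_len (i : nat) : nat :=
  if nth x0 T i \in take i T then
    \max_(l < (size T - i).+1 | [exists i' : 'I_i, occ_at i' i l]) (l : nat)
  else 1.

Fixpoint lz_factors (fuel i : nat) : seq (nat * nat) :=
  if fuel is fuel'.+1 then
    if i < size T then (i, lz_len i) :: lz_factors fuel' (i + lz_len i)
    else [::]
  else [::].

Definition lz77 : seq (nat * nat) := lz_factors (size T) 0.
End LZ77.

Definition lz77_z (A : eqType) (x0 : A) (T : seq A) : nat := size (lz77 T x0).

(* Main.v *)
Require Import Defs.
From mathcomp Require Import all_boot.
From mathcomp Require Import zify.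

Set Implicit Arguments. Unset Strict Implicit. Unset Printing Implicit Defensive.

Section Proof.
Variable T : seq bool.
Local Notation n := (size T).
Local Notation t k := (nth false T k).

Definition cc i := count id (drop i T).

Definition Phi i :=
  if i < n then
    (if t i then 3 * cc i
     else if (i == 0) || t i.-1 then 3 * cc i + 2 else 3 * cc i + 1)
  else 0.

Lemma cc_pos i : i < n -> t i -> 0 < cc i.
Proof.
move=> hi ti; rewrite /cc (drop_nth false hi) /= ti //.
Qed.

Lemma Phi_le i : Phi i <= 3 * cc i + 2.
Proof. rewrite /Phi; case: (i < n) => //; case: (t i); last case: (_ || _); lia. Qed.

Lemma Phi_ge i : i < n -> 3 * cc i <= Phi i /\ 0 < Phi i.
Proof.
move=> hi; rewrite /Phi hi; case ti: (t i).
  have := cc_pos hi ti; lia.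
case: (_ || _); lia.
Qed.

Lemma lz_len_ge1 i : i < n -> 1 <= lz_len T false i.
Proof.
move=> hi; rewrite /lz_len; case: ifP => // hin.
set i' := index (t i) (take i T).
have hsz : size (take i T) = i by rewrite size_take hi.
have hi' : i' < i by rewrite -hsz index_mem.
have e : nth false T i' = t i.
  by rewrite -(nth_take false hi') nth_index.
have h1 : 1 < (n - i).+1 by lia.
apply: (@leq_bigmax_cond _ (fun l : 'I_(n - i).+1 => [exists i' : 'I_i, occ_at T false i' i l]) (fun l => nat_of_ord l) (Ordinal h1)).
apply/existsP; exists (Ordinal hi'); rewrite /occ_at /= !addn0 e eqxx //.
Qed.

Lemma lz_len_run i l : i < n -> 0 < i -> t i.-1 = false ->
  (forall k, k < l -> t (i + k) = false) -> i + l <= n -> l <= lz_len T false i.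
Proof.
move=> hi i0 tp hk hl.
case: l hk hl => [//|l] hk hl.
have ti : t i = false by have := hk 0 isT; rewrite addn0.
have hm : t i \in take i T.
  rewrite ti -tp.
  have hp : i.-1 < i by lia.
  rewrite -(nth_take false hp); apply: mem_nth; rewrite size_take hi; lia.
rewrite /lz_len hm.
have h1 : l.+1 < (n - i).+1 by lia.
have hp : i.-1 < i by lia.
apply: (@leq_bigmax_cond _ (fun l : 'I_(n - i).+1 => [exists i' : 'I_i, occ_at T false i' i l]) (fun l => nat_of_ord l) (Ordinal h1)).
apply/existsP; exists (Ordinal hp); rewrite /occ_at.
apply/allP => k; rewrite mem_iota => /andP [_ hk'].
case: k hk' => [|k] hk'.
  by rewrite addn0 tp (hk 0 isT).
have -> : i.-1 + k.+1 = i + k by lia.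
rewrite /= in hk'; by rewrite (hk k) ?(hk k.+1) //; lia.
Qed.

Lemma count0_nth (s : seq bool) k : count id s = 0 -> nth false s k = false.
Proof.
elim: s k => [|x s IH] k //=; first by case: k.
case: x => //= h; case: k => //= k; exact: IH.
Qed.

Lemma step i : i < n -> Phi (i + lz_len T false i) < Phi i.
Proof.
move=> hi.
set l := lz_len T false i.
have l1 : 1 <= l := lz_len_ge1 hi.
set j := i + l.
have [Pi Pi0] := Phi_ge hi.
have ecc : cc i = count id (take l (drop i T)) + cc j.
  by rewrite /cc -{1}(cat_take_drop l (drop i T)) count_cat drop_drop (addnC l i).
case: (leqP n j) => hj.
  by rewrite {1}/Phi ifF // ltnNge hj.
case hm: (count id (take l (drop i T))) => [|m]; last first.
  have := Phi_le j; lia.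
have z : forall k, k < l -> t (i + k) = false.
  move=> k hk; have := count0_nth k hm.
  by rewrite nth_take // nth_drop.
have ti : t i = false by have := z 0 l1; rewrite addn0.
have tj : t j.-1 = false.
  have := z l.-1 ltac:(lia); have -> : i + l.-1 = j.-1 by rewrite /j; lia.
  by [].
have Pj : Phi j <= 3 * cc j + 1.
  have j0 : (j == 0) = false by rewrite /j; case: (l) l1 => // ? _; rewrite addnS.
  rewrite /Phi hj tj orbF j0; case: (t j); lia.
have Pieq : Phi i = (if (i == 0) || t i.-1 then 3 * cc i + 2 else 3 * cc i + 1) by rewrite /Phi hi ti.
rewrite Pieq; case: ifP => hr.
  lia.
move: hr => /norP [i0 tp]; move/negbTE: tp => tp.
case tjj: (t j).
  rewrite /Phi hj tjj; lia.
have : l.+1 <= l.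
  apply: lz_len_run => //; first lia.
  move=> k hk; case: (ltnP k l) => hkl; first exact: z.
  have -> : k = l by lia. exact: tjj.
  lia.
lia.
Qed.

Lemma main fuel i : size (lz_factors T false fuel i) <= Phi i.
Proof.
elim: fuel i => [|fuel IH] i //=.
case: ifP => // hi /=.
have := step hi; have := IH (i + lz_len T false i); lia.
Qed.

End Proof.

Theorem lemma11 (n : nat) (f : 'I_n -> bool) :
  let S := [set i | f i] in
  let T := [seq f i | i <- enum 'I_n] in
  lz77_z false T <= 3 * #|S| + 2.
Proof.
change (lz77_z false [seq f i | i <- enum 'I_n] <= 3 * #|[set i | f i]| + 2).
rewrite /lz77_z /lz77.
apply: (leq_trans (main _ _ _)).
have -> : #|[set i | f i]| = cc [seq f i | i <- enum 'I_n] 0.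
  by rewrite /cc drop0 count_map cardsE cardE enumT /enum_mem size_filter; apply: eq_count.
exact: Phi_le.
Qed.
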